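(* Let $m\ge 3$ be an integer. (1) Let $G\in\mathcal{H}_m$ and let $G_0,G_1,\dots,G_t,G$ be an $m$-decomposition of $G$ such that either $t=1$ and $G_t\neq G$, or $t\ge 2$. Then there exist positive integers $a,b$ with $b\le m$ such that $\rho^{\max}(G)=1+\frac{1}{m-1+b/a}$. (2) Let $\rho\in\left(1,\frac{m}{m-1}\right)$. Then there exists $\eta\in\mathbb{N}$ such that for every integer $v>\eta$, every graph $G\in\mathcal{H}_m$ with $v$ vertices has a subgraph with at most $\eta$ vertices whose density exceeds $\rho$.
   Context: All graphs are finite, simple, undirected. For a graph $G$, $v(G)$ and $e(G)$ are its numbers of vertices and edges, $\rho(G)=e(G)/v(G)$ its density, and $\rho^{\max}(G)=\max\{\rho(H):H\subseteq G\}$ (over all subgraphs). Let $H\subset G$ and $m$ a positive integer. $G$ is an $m$-extension of $H$ of the first type if $m\ge3$, $\rho^{\max}(G)<\frac{m}{m-1}$, and there is a vertex $x_1\in V(H)$ and integers $t_1\ge0$, $t_2\ge2$ with $t_1+t_2\le m-1$ such that $V(G)\setminus V(H)=\{y^1_1,\dots,y^1_{t_1},y^2_1,\dots,y^2_{t_2}\}$ and $E(G)\setminus E(H)=\{\{x_1,y^1_1\},\{y^1_1,y^1_2\},\dots,\{y^1_{t_1-1},y^1_{t_1}\},\{y^1_{t_1},y^2_1\},\{y^2_1,y^2_2\},\dots,\{y^2_{t_2-1},y^2_{t_2}\},\{y^2_{t_2},y^1_1\}\}$ (i.e. a path from $x_1$ followed by a cycle; when $t_1=0$, $x_1$ itself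 plays the role of $y^1_1$, being adjacent to $y^2_1$ and $y^2_{t_2}$). $G$ is an $m$-extension of $H$ of the second type if $m\ge2$, $\rho^{\max}(G)<\frac{m}{m-1}$, and there are distinct vertices $x_1,x_2\in V(H)$ and new vertices $y_1,\dots,y_t$ with $1\le t\le m-1$ such that $G=(V(H)\sqcup\{y_1,\dots,y_t\},\,E(H)\sqcup\{\{x_1,y_1\},\{y_1,y_2\},\dots,\{y_{t-1},y_t\},\{y_t,x_2\}\})$. $G$ is an $m$-extension of $H$ of the third type if $m\ge2$, $V(H)=V(G)$, $E(H)\subset E(G)$ and $\rho^{\max}(G)<\frac{m}{m-1}$. For $m\ge3$, $\mathcal{H}_m$ is the smallest class of graphs (up to isomorphism) containing the one-vertex graph with no edges and closed under taking $m$-extensions of the first, second and third types. An $m$-decomposition of $G\in\mathcal{H}_m$ is a sequence of graphs $G_0\subset G_1\subset\dots\subset G_t\subseteq G$, where $G_0$ is a one-vertex edgeless graph, $G_i\ne G_{i+1}$ for all $i$, each $G_i$ ($1\le i\le t$) is an $m$-extension of the first or second type of $G_{i-1}$, and $G$ either equals $G_t$ or is an $m$-extension of the third type of $G_t$. *)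

(* Defs.v *)
From HB Require Import structures.
From mathcomp Require Import all_boot all_order all_algebra.
From mathcomp Require Import finmap.
From mathcomp Require Import reals.
Set Implicit Arguments. Unset Strict Implicit. Unset Printing Implicit Defensive.
Import Order.TTheory GRing.Theory Num.Theory.
Local Open Scope fset_scope.

(* A (finite simple) graph: a finite set of vertices (labelled by naturals)
   and a finite set of edges, each edge being a 2-element set of vertices. *)
Record graph := Graph { gV : {fset nat}; gE : {fset {fset nat}} }.

Definition is_graph (G : graph) : Prop :=
  forall e, e \in gE G -> #|` e| = 2%N /\ e `<=` gV G.

Definition nv (G : graph) : nat := #|` gV G|.
Definition ne (G : graph) : nat := #|` gE G|.

Definition density (G : graph) : rat := ((ne G)%:R / (nv G)%:R)%R.

Definition subgraph (H G : graph) : Prop :=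
  is_graph H /\ gV H `<=` gV G /\ gE H `<=` gE G.

Definition rhomax_lt (G : graph) (r : rat) : Prop :=
  forall H, subgraph H G -> (0 < nv H)%N -> (density H < r)%R.

Definition is_rhomax (G : graph) (r : rat) : Prop :=
  (exists H, subgraph H G /\ (0 < nv H)%N /\ density H = r) /\
  (forall H, subgraph H G -> (0 < nv H)%N -> (density H <= r)%R).

Definition mbound (m : nat) : rat := (m%:R / (m.-1)%:R)%R.

Definition walk_edges (s : seq nat) : {fset {fset nat}} :=
  seq_fset tt (map (fun p => [fset p.1; p.2]) (zip s (behead s))).

Definition one_vertex (G : graph) : Prop :=
  exists x, gV G = [fset x] /\ gE G = fset0.

Definition ext1 (m : nat) (H G : graph) : Prop :=
  (3 <= m)%N /\ is_graph G /\ subgraph H G /\ rhomax_lt G (mbound m) /\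
  exists (x1 : nat) (t1 t2 : nat) (y1 y2 : seq nat),
    x1 \in gV H /\ size y1 = t1 /\ size y2 = t2 /\ (2 <= t2)%N /\
        (t1 + t2 <= m.-1)%N /\ uniq (y1 ++ y2) /\
        all (fun y => y \notin gV H) (y1 ++ y2) /\
        gV G = gV H `|` seq_fset tt (y1 ++ y2) /\
        (* path x1, y^1_1, ..., y^1_{t1}, y^2_1, ..., y^2_{t2}, closed back to
           y^1_1 (to x1 when t1 = 0) *)
        gE G = gE H `|` walk_edges (x1 :: y1 ++ y2 ++ [:: head x1 y1]).

Definition ext2 (m : nat) (H G : graph) : Prop :=
  (2 <= m)%N /\ is_graph G /\ subgraph H G /\ rhomax_lt G (mbound m) /\
  exists (x1 x2 : nat) (ys : seq nat),
    x1 \in gV H /\ x2 \in gV H /\ x1 != x2 /\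
        (1 <= size ys <= m.-1)%N /\ uniq ys /\
        all (fun y => y \notin gV H) ys /\
        gV G = gV H `|` seq_fset tt ys /\
        gE G = gE H `|` walk_edges (x1 :: ys ++ [:: x2]).

Definition ext3 (m : nat) (H G : graph) : Prop :=
  (2 <= m)%N /\ is_graph G /\ subgraph H G /\ gV H = gV G /\
  gE H `<=` gE G /\ gE H != gE G /\ rhomax_lt G (mbound m).

Definition graph_iso (G G' : graph) : Prop :=
  exists f : nat -> nat, {in gV G &, injective f} /\
    gV G' = f @` gV G /\ gE G' = (fun e : {fset nat} => f @` e) @` gE G.

Inductive inHm (m : nat) : graph -> Prop :=
  | Hm_base G : one_vertex G -> inHm m G
  | Hm_iso G G' : inHm m G -> graph_iso G G' -> inHm m G'
  | Hm_ext1 H G : inHm m H -> ext1 m H G -> inHm m G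
  | Hm_ext2 H G : inHm m H -> ext2 m H G -> inHm m G
  | Hm_ext3 H G : inHm m H -> ext3 m H G -> inHm m G.

Definition mdecomp (m : nat) (G : graph) (Gs : nat -> graph) (t : nat) : Prop :=
  [/\ one_vertex (Gs 0%N),
      (forall i, (i < t)%N -> Gs i <> Gs i.+1 /\
                 (ext1 m (Gs i) (Gs i.+1) \/ ext2 m (Gs i) (Gs i.+1))),
      subgraph (Gs t) G &
      (G = Gs t \/ ext3 m (Gs t) G)].

(* Main.v *)
Require Import Defs.
From HB Require Import structures.
From mathcomp Require Import all_boot all_order all_algebra.
From mathcomp Require Import finmap.
From mathcomp Require Import reals.
From mathcomp Require Import zify.
From mathcomp.algebra_tactics Require Import ring lra.
From Stdlib Require Import Classical.
Import Order.TTheory GRing.Theory Num.Theory.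
Set Implicit Arguments. Unset Strict Implicit.

Section GraphLemmas.
Local Open Scope fset_scope.
Definition edl (w : seq nat) : seq {fset nat} :=
  map (fun p => [fset p.1; p.2]) (zip w (behead w)).

Lemma edl_cons2 a b r : edl [:: a, b & r] = [fset a; b] :: edl (b :: r).
Proof. by []. Qed.

Lemma edl_sub w e x : e \in edl w -> x \in e -> x \in w.
Proof.
elim: w => [|a r IH] //; case: r IH => [|b r] IH //.
rewrite edl_cons2 inE => /orP [/eqP -> | He] Hx.
  by move: Hx; rewrite in_fset2 !inE => /orP [->|->] //; rewrite orbT.
by rewrite inE (IH He Hx) orbT.
Qed.

Lemma edl_uniq w : uniq w -> uniq (edl w).
Proof.
elim: w => [|a r IH] //; case: r IH => [|b r] IH // /andP [Ha Hu].
rewrite edl_cons2 cons_uniq IH // andbT; apply/negP => He.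
have := @edl_sub _ _ a He; rewrite in_fset2 eqxx => /(_ isT).
by rewrite (negbTE Ha).
Qed.

Lemma size_edl w : size (edl w) = (size w).-1.
Proof. case: w => [|a r] //=; rewrite /edl size_map size_zip /=; lia. Qed.

Lemma edl_hit ys a c e : ys != [::] -> e \in edl (a :: ys ++ [:: c]) ->
  exists2 y, y \in ys & y \in e.
Proof.
elim: ys a => [|y ys IH] a // _.
rewrite /= edl_cons2 inE => /orP [/eqP -> | He].
  by exists y; rewrite ?inE ?in_fset2 eqxx ?orbT.
case: ys IH He => [|y' ys'] IH He.
  by exists y; rewrite ?inE //; move: He; rewrite /= edl_cons2 inE => /eqP ->; rewrite in_fset2 eqxx.
have [z Hz Hze] := IH y isT He.
by exists z => //; rewrite inE Hz orbT.
Qed.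

Lemma edl_cyc z r : uniq (z :: r) -> (2 <= size r)%N -> uniq (edl (z :: r ++ [:: z])).
Proof.
case: r => [|a [|b r']] // Huq _.
rewrite !cat_cons edl_cons2.
rewrite !cons_uniq !inE !negb_or in Huq.
case/andP: Huq => /andP [Hza /andP [Hzb Hzr]] /andP [/andP [Hab Har] /andP [Hbr Hr]].
have Hw : uniq ((a :: b :: r') ++ [:: z]).
  by rewrite cat_uniq /= !inE orbF !negb_or Hab Har Hbr Hr Hza Hzb Hzr.
rewrite cons_uniq (edl_uniq Hw) andbT edl_cons2 inE negb_or; apply/andP; split.
  apply/negP => /eqP E; have : b \in [fset z; a] by rewrite E in_fset2 eqxx orbT.
  by rewrite in_fset2 (eq_sym b z) (negbTE Hzb) (eq_sym b a) (negbTE Hab).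
apply/negP => He; have := @edl_sub _ _ a He; rewrite in_fset2 eqxx orbT => /(_ isT).
by rewrite !inE mem_cat !inE (negbTE Hab) (negbTE Har) (eq_sym a z) (negbTE Hza).
Qed.

Lemma card_walk w : uniq (edl w) -> #|` walk_edges w| = (size w).-1.
Proof. by move=> U; rewrite /walk_edges size_seq_fset -/(edl w) undup_id // size_edl. Qed.

Lemma card_seq_fset_le (s : seq nat) : (#|` seq_fset tt s| <= size s)%N.
Proof. by rewrite size_seq_fset size_undup. Qed.

Lemma card_ext (H G : graph) ys w : is_graph H -> ys != [::] ->
  all (fun y => y \notin gV H) ys ->
  gV G = gV H `|` seq_fset tt ys -> gE G = gE H `|` walk_edges w ->
  (exists a c, w = a :: ys ++ [:: c]) -> uniq (edl w) -> (size w).-1 = (size ys).+1 ->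
  (nv G <= nv H + size ys)%N /\ (ne H + (size ys).+1 = ne G)%N.
Proof.
move=> gH ys0 yH eV eE [a [c ew]] U sw; split.
  rewrite /nv eV; apply: leq_trans (leq_card_fsetU _ _) _.
  by rewrite leq_add2l card_seq_fset_le.
rewrite /ne eE -sw -(card_walk U).
have D : gE H `&` walk_edges w = fset0.
  apply/eqP; rewrite fsetI_eq0; apply/fdisjointP => e eH.
  apply/negP => eW; have eW' : e \in edl w by move: eW; rewrite /walk_edges seq_fsetE.
  rewrite ew in eW'; have [y yys ye] := edl_hit ys0 eW'.
  have [_ /fsubsetP sub] := gH e eH.
  by move: (allP yH y yys); rewrite (sub y ye).
by have := cardfsUI (gE H) (walk_edges w); rewrite D cardfs0 addn0 => ->.
Qed.

Lemma ext12_count m H G : ext1 m H G \/ ext2 m H G ->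
  [/\ is_graph G, subgraph H G, rhomax_lt G (mbound m) &
   exists s, [/\ (s <= m.-1)%N, (nv G <= nv H + s)%N & (ne H + s.+1 = ne G)%N]].
Proof.
case=> [[_ [gG [sHG [rG [x1 [t1 [t2 [y1 [y2 [xH [s1 [s2 [t22 [tm [U [A [eV eE]]]]]]]]]]]]]]]]]
      |[_ [gG [sHG [rG [x1 [x2 [ys [x1H [x2H [x12 [/andP [sy1 sym] [U [A [eV eE]]]]]]]]]]]]]]];
  split => //; have gH := sHG.1.
- 
  have x1y : x1 \notin y1 ++ y2 by apply/negP => /(allP A); rewrite xH.
  have ys0 : y1 ++ y2 != [::] by rewrite -size_eq0 size_cat s2; lia.
  have Uw : uniq (edl (x1 :: y1 ++ y2 ++ [:: head x1 y1])).
    clear A eV eE; case: y1 s1 U x1y ys0 => [|c y1'] s1 U x1y _.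
      by move: x1y U => /= x1y U; apply: edl_cyc; [rewrite /= x1y U | rewrite s2].
    rewrite cat_cons edl_cons2 cons_uniq [head _ _]/= catA; apply/andP; split; last first.
      by apply: edl_cyc; [exact: U | rewrite size_cat s2; lia].
    apply/negP => He; have := @edl_sub _ _ x1 He; rewrite in_fset2 eqxx => /(_ isT).
    move: x1y; rewrite -catA -cat_cons !mem_cat !inE !negb_or => /andP [/andP [xc xy1] xy2].
    by rewrite (negbTE xc) (negbTE xy1) (negbTE xy2).
  have [] := card_ext gH ys0 A eV eE _ Uw _.
  + by exists x1, (head x1 y1); rewrite catA.
  + by rewrite /= !size_cat /=; lia.
  + rewrite size_cat s1 s2 => C1 C2; exists (t1 + t2)%N; split => //.
- 
  have x1y : x1 \notin ys by apply/negP => /(allP A); rewrite x1H.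
  have x2y : x2 \notin ys by apply/negP => /(allP A); rewrite x2H.
  have ys0 : ys != [::] by case: (ys) sy1.
  have Uw : uniq (edl (x1 :: ys ++ [:: x2])).
    apply: edl_uniq; rewrite cons_uniq mem_cat inE negb_or x1y x12 /= cat_uniq U /=.
    by rewrite orbF x2y.
  have [] := card_ext gH ys0 A eV eE _ Uw _.
  + by exists x1, x2.
  + by rewrite /= size_cat /= addn1.
  + by move=> C1 C2; exists (size ys).
Qed.

End GraphLemmas.

Section Arith.
Local Open Scope ring_scope.
Lemma rho_lt (e v m : nat) : (0 < v)%N -> (2 <= m)%N ->
  (e%:R / v%:R < m%:R / (m.-1)%:R :> rat) -> (m.-1 * e < m * v)%N.
Proof.
move=> v0 m2 H.
have k0 : (0 : rat) < (m.-1)%:R by rewrite ltr0n; lia.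
have v0' : (0 : rat) < v%:R by rewrite ltr0n.
rewrite -(ltr_nat rat) !natrM.
rewrite ltr_pdivrMr // mulrAC ltr_pdivlMr // in H.
by rewrite mulrC.
Qed.

Lemma dens_le (e1 v1 e2 v2 : nat) : (0 < v1)%N -> (0 < v2)%N ->
  (e1 * v2 <= e2 * v1)%N -> (e1%:R / v1%:R <= e2%:R / v2%:R :> rat).
Proof.
move=> v10 v20 H.
have v1' : (0 : rat) < v1%:R by rewrite ltr0n.
have v2' : (0 : rat) < v2%:R by rewrite ltr0n.
rewrite ler_pdivrMr // mulrAC ler_pdivlMr //.
by rewrite -!natrM ler_nat.
Qed.

Lemma dens_formula (e v m : nat) : (0 < v)%N -> (v < e)%N -> (2 <= m)%N ->
  (m.-1 * e < m * v)%N ->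
  e%:R / v%:R = 1 + 1 / ((m.-1)%:R + (m * v - m.-1 * e)%:R / (e - v)%:R) :> rat.
Proof.
case: m => [|k] // v0 ve m2 H; rewrite [k.+1.-1]/= in H *.
have v0' : v%:R != 0 :> rat by rewrite pnatr_eq0 -lt0n.
have a0 : (e - v)%:R != 0 :> rat by rewrite pnatr_eq0; lia.
have ev : (e - v)%:R = e%:R - v%:R :> rat by rewrite natrB // ltnW.
have bb : (k.+1 * v - k * e)%:R = (k%:R + 1) * v%:R - k%:R * e%:R :> rat.
  by rewrite natrB ?(ltnW H) // !natrM natr1.
rewrite bb.
have D : k%:R + ((k%:R + 1) * v%:R - k%:R * e%:R) / (e - v)%:R = v%:R / (e - v)%:R :> rat.
  by rewrite ev; field; rewrite -ev.
rewrite D ev; field; by rewrite -ev a0 v0'.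
Qed.

End Arith.

Section Graph2.
Local Open Scope fset_scope.

Lemma ext3_count m H G : ext3 m H G ->
  [/\ is_graph G, subgraph H G, rhomax_lt G (mbound m), nv G = nv H & (ne H < ne G)%N].
Proof.
case=> _ [gG [sHG [eV [sE [nE rG]]]]]; split => //; first by rewrite /nv eV.
by apply: fproper_ltn_card; rewrite fproperEneq nE sE.
Qed.

Lemma one_vertex_count G : one_vertex G -> [/\ is_graph G, nv G = 1%N & ne G = 0%N].
Proof.
case=> x [eV eE]; split; last by rewrite /ne eE cardfs0.
  by move=> e; rewrite eE.
by rewrite /nv eV cardfs1.
Qed.

Lemma subgraph_refl G : is_graph G -> subgraph G G.
Proof. by move=> gG; split => //; split; apply: fsubset_refl. Qed.

Lemma subgraph_trans H K G : subgraph H K -> subgraph K G -> subgraph H G.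
Proof.
case=> gH [s1 s2] [_ [s3 s4]]; split => //; split; exact: fsubset_trans s3 || exact: fsubset_trans s4.
Qed.

Lemma subgraph_card H G : subgraph H G -> (nv H <= nv G)%N /\ (ne H <= ne G)%N.
Proof. by case=> _ [s1 s2]; split; apply: fsubset_leq_card. Qed.

Lemma img_sub (f : nat -> nat) (A B : {fset nat}) : A `<=` B -> f @` A `<=` f @` B.
Proof.
move=> /fsubsetP sAB; apply/fsubsetP => y /imfsetP [x xA ->].
by apply/imfsetP; exists x => //; apply: sAB.
Qed.

Lemma img_card (f : nat -> nat) (A B : {fset nat}) : {in B &, injective f} -> A `<=` B ->
  #|` f @` A| = #|` A|.
Proof.
move=> fi /fsubsetP sAB; rewrite card_in_imfset //.
by move=> x y xA yA; apply: fi; apply: sAB.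
Qed.

Lemma iso_img (G H : graph) (f : nat -> nat) : is_graph G -> {in gV G &, injective f} ->
  subgraph H G ->
  [/\ is_graph (Graph (f @` gV H) ((fun e : {fset nat} => f @` e) @` gE H)),
      nv (Graph (f @` gV H) ((fun e : {fset nat} => f @` e) @` gE H)) = nv H &
      ne (Graph (f @` gV H) ((fun e : {fset nat} => f @` e) @` gE H)) = ne H].
Proof.
move=> gG fi [gH [sV sE]].
have fiH : {in gV H &, injective f}.
  by move=> x y xH yH; apply: fi; apply: (fsubsetP sV).
split.
- move=> e' /imfsetP [e eH ->] /=; have [c2 se] := gH e eH; split.
    by rewrite (img_card fiH se).
  exact: img_sub.
- by rewrite /nv /= (img_card fiH (fsubset_refl _)).
- rewrite /ne /= card_in_imfset // => e1 e2 /= e1H e2H E.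
  have [_ s1] := gH e1 e1H; have [_ s2] := gH e2 e2H.
  have key : forall a b, a \in gE H -> b \in gE H -> f @` a = f @` b -> a `<=` b.
    move=> a b aH bH Eab; have [_ sa] := gH a aH; have [_ sb] := gH b bH.
    apply/fsubsetP => x xa; have : f x \in f @` b by rewrite -Eab; apply/imfsetP; exists x.
    case/imfsetP => y yb Efy; have -> : x = y by apply: fiH => //; [apply: (fsubsetP sa) | apply: (fsubsetP sb)].
    done.
  by apply/eqP; rewrite eqEfsubset !key.
Qed.

End Graph2.

Section MaxSec.
Local Open Scope ring_scope.

Lemma list_max (P : nat * nat -> Prop) (f : nat * nat -> rat) (l : seq (nat * nat)) :
  (exists p, P p /\ p \in l) ->
  exists p, P p /\ forall q, P q -> q \in l -> f q <= f p.
Proof.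
elim: l => [|a l IH]; first by case=> p [_].
case=> p [Pp pl].
case: (classic (exists p, P p /\ p \in l)) => [ex|nex].
  have [p' [Pp' M]] := IH ex.
  case: (classic (P a)) => Pa.
    case: (leP (f a) (f p')) => fa.
      exists p'; split => // q Pq; rewrite inE => /orP [/eqP ->|ql]; [exact: fa| exact: M].
    exists a; split => // q Pq; rewrite inE => /orP [/eqP ->|ql] //.
    exact: le_trans (M q Pq ql) (ltW fa).
  exists p'; split => // q Pq; rewrite inE => /orP [/eqP E|ql]; last exact: M.
  by move: Pq; rewrite E.
have pa : p = a.
  move: pl; rewrite inE => /orP [/eqP //|pl]; by case: nex; exists p.
exists a; split; first by rewrite -pa.
move=> q Pq; rewrite inE => /orP [/eqP -> //|ql]; by case: nex; exists q.
Qed.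

Lemma densest G : is_graph G -> (0 < nv G)%N -> exists H,
  [/\ subgraph H G, (0 < nv H)%N &
      forall K, subgraph K G -> (0 < nv K)%N -> density K <= density H].
Proof.
move=> gG v0.
pose P := fun p : nat * nat => exists K, [/\ subgraph K G, (0 < nv K)%N & (ne K, nv K) = p].
pose l := [seq (a, b) | a <- iota 0 (ne G).+1, b <- iota 0 (nv G).+1].
have inl : forall K, subgraph K G -> (ne K, nv K) \in l.
  move=> K /subgraph_card [c1 c2].
  have h1 : ne K \in iota 0 (ne G).+1 by rewrite mem_iota add0n ltnS c2.
  have h2 : nv K \in iota 0 (nv G).+1 by rewrite mem_iota add0n ltnS c1.
  by apply/allpairsP; exists (ne K, nv K).
have [p [[H [sH vH <-]] M]] := @list_max P (fun p => p.1%:R / p.2%:R) l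
   (ex_intro _ (ne G, nv G) (conj (ex_intro _ G (And3 (subgraph_refl gG) v0 erefl)) (inl G (subgraph_refl gG)))).
exists H; split => // K sK vK.
exact: (M (ne K, nv K) (ex_intro _ K (And3 sK vK erefl)) (inl K sK)).
Qed.

End MaxSec.

Section Main1.
Local Open Scope ring_scope.

Lemma rho_sub m G K : (2 <= m)%N -> rhomax_lt G (mbound m) -> subgraph K G -> (0 < nv K)%N ->
  (m.-1 * ne K < m * nv K)%N.
Proof. by move=> m2 rG sK vK; apply: rho_lt vK m2 (rG K sK vK). Qed.

Lemma dens_leE (e1 v1 e2 v2 : nat) : (0 < v1)%N -> (0 < v2)%N ->
  (e1%:R / v1%:R <= e2%:R / v2%:R :> rat)%R -> (e1 * v2 <= e2 * v1)%N.
Proof.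
move=> v10 v20 H.
have v1' : (0 : rat) < v1%:R by rewrite ltr0n.
have v2' : (0 : rat) < v2%:R by rewrite ltr0n.
rewrite ler_pdivrMr // mulrAC ler_pdivlMr // in H.
by rewrite -(ler_nat rat) !natrM.
Qed.

Lemma decomp_inv m G Gs t : (3 <= m)%N -> mdecomp m G Gs t -> forall i, (i <= t)%N ->
  [/\ (0 < nv (Gs i))%N, (m * nv (Gs i) <= m.-1 * ne (Gs i) + m)%N &
      (nv (Gs i) + i <= ne (Gs i) + 1)%N].
Proof.
move=> m3 [o0 st _ _]; elim=> [|i IH] it.
  by have [_ -> ->] := one_vertex_count o0; split => //; lia.
have [v0 b0 c0] := IH (ltnW it).
have [_ /ext12_count [_ sHG _ [s [sm v1 e1]]]] := st i it.
have := subgraph_card sHG => -[vv _].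
split; [lia | nia | lia].
Qed.

Lemma part1 m G Gs t : (3 <= m)%N -> mdecomp m G Gs t ->
  ((t = 1%N /\ Gs t <> G) \/ (2 <= t)%N) ->
  exists a b : nat, [/\ (0 < a)%N, (0 < b)%N, (b <= m)%N &
    is_rhomax G (1 + 1 / ((m.-1)%:R + b%:R / a%:R))%R].
Proof.
move=> m3 D tc.
have t1 : (1 <= t)%N by case: tc => [[->]|]; lia.
have [v0 b0 c0] := decomp_inv m3 D (leqnn t).
case: (D) => _ st _ Glast.
have E1 : t.-1.+1 = t by rewrite prednK.
have [_ X] := st t.-1 ltac:(by rewrite E1).
rewrite E1 in X; have [gt _ rt _] := ext12_count X.
have [gG rG vG BG EG] : [/\ is_graph G, rhomax_lt G (mbound m), (0 < nv G)%N,
    (m * nv G <= m.-1 * ne G + m)%N & (nv G < ne G)%N].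
  case: Glast => [EG|/ext3_count [gG _ rG eV eE]].
    rewrite EG; split => //; case: tc => [[t1' ne]|t2]; first by case: ne; rewrite EG.
    lia.
  rewrite eV; split => //; nia.
have m2 : (2 <= m)%N by lia.
have [H [sH vH MH]] := densest gG vG.
have bH := rho_sub m2 rG sH vH.
have bG := rho_sub m2 rG (subgraph_refl gG) vG.
have [vHG _] := subgraph_card sH.
have dGH := dens_leE vG vH (MH G (subgraph_refl gG) vG).
case: (leqP (m * nv H) (m.-1 * ne H + m)) => BH.
- have eH : (nv H < ne H)%N by nia.
  exists (ne H - nv H)%N, (m * nv H - m.-1 * ne H)%N; split; [lia|lia|lia|].
  rewrite -dens_formula //; split; first by exists H.
  exact: MH.
- exists (ne G - nv G)%N, (m * nv G - m.-1 * ne G)%N; split; [lia|lia|lia|].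
  rewrite -dens_formula //; split; first by exists G; split => //; exact: subgraph_refl.
  move=> K sK vK; apply: (Order.POrderTheory.le_trans (MH K sK vK)).
  apply: dens_le => //.
  have k0 : (0 < m.-1)%N by lia.
  suff : (m.-1 * (ne H * nv G) <= m.-1 * (ne G * nv H))%N by rewrite leq_pmul2l.
  nia.
Qed.

End Main1.

Section Main2.
Local Open Scope ring_scope.

Definition winP m G := forall N, (0 < N)%N -> (N <= nv G)%N -> exists H,
  [/\ subgraph H G, (N <= nv H)%N, (nv H <= N + m - 2)%N & (m * nv H <= m.-1 * ne H + m)%N].

Lemma inv2 m G : (3 <= m)%N -> inHm m G ->
  [/\ is_graph G, (m * nv G <= m.-1 * ne G + m)%N & winP m G].
Proof.
move=> m3; elim=> {G}.
- move=> G /one_vertex_count [gG v1 e0]; split; [done| rewrite v1 e0; lia|].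
  move=> N N0 NG; exists G; split; [exact: subgraph_refl | lia | lia | rewrite v1 e0; lia].
- move=> G G' _ [gG BG WG] [f [fi [eV eE]]].
  have [gG' vG' eG'] := iso_img gG fi (subgraph_refl gG).
  move: gG' vG' eG'; rewrite -eV -eE.
  have -> : Graph (gV G') (gE G') = G' by case: (G').
  move=> gG' vG' eG'; split => //; first by rewrite vG' eG'.
  move=> N N0 NG; rewrite vG' in NG; have [H [sH NH HN BH]] := WG N N0 NG.
  have [gH' vH' eH'] := iso_img gG fi sH.
  exists (Graph (f @` gV H)%fset ((fun e : {fset nat} => f @` e)%fset @` gE H)%fset).
  rewrite vH' eH'; split => //; split => //=; rewrite ?eV ?eE.
  have [_ [s1 s2]] := sH; split; first exact: img_sub.
  apply/fsubsetP => y /imfsetP [x xA ->]; apply/imfsetP; exists x => //.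
  exact: (fsubsetP s2).
- move=> H G _ [gH BH WH] X; have [gG sHG _ [s [sm v1 e1]]] := ext12_count (or_introl X).
  have [vv _] := subgraph_card sHG.
  split => //; first nia.
  move=> N N0 NG; case: (leqP N (nv H)) => NH.
    have [K [sK ? ? ?]] := WH N N0 NH; exists K; split => //; exact: subgraph_trans sK sHG.
  exists G; split; [exact: subgraph_refl gG | lia | lia | nia].
- move=> H G _ [gH BH WH] X; have [gG sHG _ [s [sm v1 e1]]] := ext12_count (or_intror X).
  have [vv _] := subgraph_card sHG.
  split => //; first nia.
  move=> N N0 NG; case: (leqP N (nv H)) => NH.
    have [K [sK ? ? ?]] := WH N N0 NH; exists K; split => //; exact: subgraph_trans sK sHG.
  exists G; split; [exact: subgraph_refl gG | lia | lia | nia].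
- move=> H G _ [gH BH WH] /ext3_count [gG sHG _ eV eE].
  split => //; first nia.
  move=> N N0 NG; rewrite eV in NG; have [K [sK ? ? ?]] := WH N N0 NG.
  exists K; split => //; exact: subgraph_trans sK sHG.
Qed.

End Main2.

Local Open Scope ring_scope.

Theorem lemma1 (R : realType) (m : nat) (hm : (3 <= m)%N) :
  (forall (G : graph) (Gs : nat -> graph) (t : nat),
     inHm m G -> mdecomp m G Gs t ->
     ((t = 1%N /\ Gs t <> G) \/ (2 <= t)%N) ->
     exists a b : nat, [/\ (0 < a)%N, (0 < b)%N, (b <= m)%N &
       is_rhomax G (1 + 1 / ((m.-1)%:R + b%:R / a%:R))])
  /\
  (forall r : R, 1 < r -> r < (m%:R / (m.-1)%:R) ->
     exists eta : nat, forall v : nat, (eta < v)%N ->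
       forall G : graph, inHm m G -> nv G = v ->
         exists H : graph, [/\ subgraph H G, (nv H <= eta)%N & r < ratr (density H)]).
Proof.
split; first by move=> G Gs t _ D tc; exact: part1 hm D tc.
move=> r r1 rm.
have k0 : (0 : R) < (m.-1)%:R by rewrite ltr0n; lia.
set k : R := (m.-1)%:R in k0 rm *.
have rk : r * k < m%:R by rewrite -ltr_pdivlMr.
set d : R := m%:R - k * r.
have d0 : 0 < d by rewrite /d subr_gt0 mulrC.
pose N := (Num.bound (m%:R / d)).+1.
have hN : m%:R / d < N%:R.
  apply: lt_trans (archi_boundP _) _; first by rewrite divr_ge0 // ?ler0n ltW.
  by rewrite ltr_nat.
exists (N + m - 2)%N => v vlt G hG vG.
have [_ _ WG] := inv2 hm hG.
have [H [sH NH HN BH]] := WG N isT ltac:(rewrite vG; lia).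
exists H; split => //.
have vH0 : (0 < nv H)%N by lia.
have vH : (0 : R) < (nv H)%:R by rewrite ltr0n.
rewrite /density fmorph_div !rmorph_nat ltr_pdivlMr //.
have B : m%:R * (nv H)%:R <= k * (ne H)%:R + m%:R :> R.
  by rewrite /k -!natrM -natrD ler_nat.
have NHR : N%:R <= (nv H)%:R :> R by rewrite ler_nat.
have md : m%:R < (nv H)%:R * d.
  by rewrite -ltr_pdivrMr //; apply: lt_le_trans hN NHR.
have : k * (r * (nv H)%:R) < k * (ne H)%:R.
  have -> : k * (r * (nv H)%:R) = (m%:R - d) * (nv H)%:R by rewrite /d; ring.
  lra.
by rewrite ltr_pM2l.
Qed.
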